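(* There is no $x\in\mathbb{R}\setminus\mathbb{Q}$ whose Jacobi sequence contains four consecutive terms $-1,1,1,-1$; that is, there is no $k\ge0$ with $\left(\frac{s_k}{t_k}\right)=-1$, $\left(\frac{s_{k+1}}{t_{k+1}}\right)=\left(\frac{s_{k+2}}{t_{k+2}}\right)=1$, $\left(\frac{s_{k+3}}{t_{k+3}}\right)=-1$. In particular, there is no $x\in\mathbb{R}\setminus\mathbb{Q}$ whose Jacobi sequence is eventually periodic with repeating block $1,1,-1$.
   Context: For $x\in\mathbb{R}\setminus\mathbb{Q}$ with regular continued fraction expansion $x=[a_0,a_1,a_2,\ldots]$, the convergents $s_k/t_k$ are defined by $s_{-1}=1$, $s_0=a_0$, $s_k=a_ks_{k-1}+s_{k-2}$ and $t_{-1}=0$, $t_0=1$, $t_k=a_kt_{k-1}+t_{k-2}$ for $k\ge1$. For an odd natural number $n$ and an integer $m$ coprime to $n$, $\left(\frac{m}{n}\right)$ is the usual Jacobi symbol (equal to $1$ if $n=1$); if $n$ is even and $\gcd(m,n)=1$, one sets $\left(\frac{m}{n}\right)=*$, a fixed symbol different from $\pm1$. The Jacobi sequence of $x$ is $\left(\frac{s_k}{t_k}\right)$, $k\ge 0$. *)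

(* Defs.v *)
From HB Require Import structures.
From mathcomp Require Import all_boot all_order all_algebra.
From mathcomp Require Import reals.
Set Implicit Arguments. Unset Strict Implicit. Unset Printing Implicit Defensive.
Import Order.TTheory GRing.Theory Num.Theory.
Local Open Scope ring_scope.

Fixpoint cf_rem (R : realType) (x : R) (k : nat) : R :=
  match k with
  | 0 => x
  | k'.+1 => (cf_rem x k' - (Num.floor (cf_rem x k'))%:~R)^-1
  end.

Definition cf_digit (R : realType) (x : R) (k : nat) : int :=
  Num.floor (cf_rem x k).

(* Convergent recursion: returns (s_{k-1}, s_k, t_{k-1}, t_k), with
   s_{-1}=1, s_0=a_0, t_{-1}=0, t_0=1. *)
Fixpoint conv (a : nat -> int) (k : nat) : int * int * int * int :=
  match k with
  | 0 => (1, a 0, 0, 1)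
  | k'.+1 =>
      let: (sp, s, tp, t) := conv a k' in
      (s, a k * s + sp, t, a k * t + tp)
  end.

Definition conv_s (a : nat -> int) (k : nat) : int := (conv a k).1.1.2.
Definition conv_t (a : nat -> int) (k : nat) : int := (conv a k).2.

Definition legendre (m : int) (p : nat) : int :=
  if (p %| `|m|%N)%N then 0
  else if [exists y : 'I_p, ((y * y) %% p)%N == `|(m %% p%:Z)%Z|%N] then 1
  else -1.

Definition jacobi (m : int) (n : nat) : int :=
  \prod_(p <- primes n) legendre m p ^+ logn p n.

(* Jacobi symbol with the convention (m/n) = * (here: None) for n even. *)
Definition jacobi_ext (m : int) (n : int) : option int :=
  if odd `|n|%N then Some (jacobi m `|n|%N) else None.

Definition jacobi_seq (R : realType) (x : R) (k : nat) : option int :=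
  jacobi_ext (conv_s (cf_digit x) k) (conv_t (cf_digit x) k).

(* Main.v *)
Require Import Defs.
From HB Require Import structures.
From mathcomp Require Import all_boot all_order all_algebra.
From mathcomp Require Import reals.
From mathcomp Require Import cyclic finfield.
From mathcomp Require Import zify ring lra.
Set Implicit Arguments. Unset Strict Implicit. Unset Printing Implicit Defensive.
Import Order.TTheory GRing.Theory Num.Theory.

Lemma sum_le_min (n c : nat) : \sum_(i < n) (i.+1 <= c) = minn n c.
Proof.
elim: n => [|n IH]; first by rewrite big_ord0; lia.
rewrite big_ord_recr /= IH.
by case: (leqP n.+1 c) => h /=; lia.
Qed.

Lemma sum_le_count (n c : nat) : c <= n -> \sum_(i < n) (i.+1 <= c) = c.
Proof. rewrite sum_le_min; lia. Qed.

Section Lattice.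
Variables p q : nat.
Hypothesis op : odd p.
Hypothesis oq : odd q.
Hypothesis cpq : coprime p q.

Lemma neq_mul (i j : nat) : i < q./2 -> p * i.+1 != q * j.+1.
Proof.
move=> il; apply/eqP => e.
have : q %| p * i.+1 by rewrite e dvdn_mulr.
rewrite Gauss_dvdr; last by rewrite coprime_sym.
move/dvdn_leq => /(_ isT).
have := odd_double_half q; rewrite oq; lia.
Qed.

Lemma floor_count (j : nat) : j < p./2 ->
  q * j.+1 %/ p = \sum_(i < q./2) (p * i.+1 < q * j.+1).
Proof.
move=> jl.
have p0 : 0 < p by case: (p) op.
have hp := odd_double_half p; have hq := odd_double_half q; rewrite op in hp; rewrite oq in hq.
rewrite -(@sum_le_count q./2 (q * j.+1 %/ p)).
  apply: eq_bigr => i _.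
  congr (nat_of_bool _); by rewrite [RHS]ltn_neqAle neq_mul //= leq_divRL // mulnC.
have : q * j.+1 %/ p < q./2.+1.
  rewrite ltn_divLR //.
  have : q * j.+1 <= q * p./2 by rewrite leq_mul2l jl orbT.
  nia.
lia.
Qed.
End Lattice.

Lemma lattice (p q : nat) : odd p -> odd q -> coprime p q ->
  \sum_(j < p./2) (q * j.+1 %/ p) + \sum_(i < q./2) (p * i.+1 %/ q) = p./2 * q./2.
Proof.
move=> op oq cpq.
rewrite (eq_bigr _ (fun j _ => floor_count op oq cpq (ltn_ord j))).
have cqp : coprime q p by rewrite coprime_sym.
rewrite (eq_bigr _ (fun i _ => floor_count oq op cqp (ltn_ord i))).
rewrite [X in _ + X]exchange_big -big_split /=.
transitivity (\sum_(j < p./2) \sum_(i < q./2) 1).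
  apply: eq_bigr => j _; rewrite -big_split /=; apply: eq_bigr => i _.
  have := @neq_mul p q op oq cpq i j (ltn_ord i).
  by case: ltngtP.
rewrite (eq_bigr (fun _ => q./2)); last by move=> j _; rewrite sum_nat_const card_ord muln1.
by rewrite sum_nat_const card_ord.
Qed.

Local Open Scope ring_scope.

Section Euler.
Variable F : finFieldType.

Lemma fermatF (x : F) : x != 0 -> x ^+ #|F|.-1 = 1.
Proof.
move=> nz; have := expf_card x.
have c0 : (0 < #|F|)%N by apply/card_gt0P; exists 0.
rewrite -(prednK c0) exprS => /(congr1 (fun y => x^-1 * y)).
by rewrite mulKf // mulVf.
Qed.

Lemma primF : exists z : F, (#|F|.-1).-primitive_root z.
Proof.
have c1 : (0 < #|F|.-1)%N.
  rewrite -(cardC1 (0:F)); apply/card_gt0P; exists 1; by rewrite !inE oner_eq0.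
have h1 : all (#|F|.-1).-unity_root (enum (predC1 (0:F))).
  apply/allP => x; rewrite mem_enum !inE => nz.
  by rewrite unity_rootE fermatF.
have h3 : (#|F|.-1 <= size (enum (predC1 (0%R:F))))%N by rewrite -cardE cardC1.
have [z _ pz] := hasP (has_prim_root c1 h1 (enum_uniq _) h3).
by exists z.
Qed.
End Euler.

Section Euler2.
Variable F : finFieldType.
Hypothesis oddF : odd #|F|.
Let n := #|F|.-1.
Let h := n./2.

Lemma n_eq : n = (h * 2)%N.
Proof.
rewrite /h /n; have c0 : (0 < #|F|)%N by apply/card_gt0P; exists 0.
move: oddF; rewrite -(prednK c0) /= => /negbTE e.
by rewrite -[in LHS](odd_double_half #|F|.-1) e muln2.
Qed.

Lemma h_gt0 : (0 < h)%N.
Proof.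
have c1 : (1 < #|F|)%N.
  by apply/card_gt1P; exists 0, 1; rewrite !inE eq_sym oner_eq0.
have e := n_eq; rewrite /n in e; move: e c1; rewrite /h /n; generalize (#|F|.-1)./2 => k. lia.
Qed.

Lemma euler_pm (x : F) : x != 0 -> x ^+ h = 1 \/ x ^+ h = -1.
Proof.
move=> nz; have : (x ^+ h) ^+ 2 == 1 by rewrite -exprM -n_eq fermatF.
by rewrite sqrf_eq1 => /orP [/eqP -> | /eqP ->]; [left|right].
Qed.

Lemma euler_sq (x : F) : x != 0 -> (exists y, y * y = x) <-> x ^+ h = 1.
Proof.
move=> nz; split.
  move=> [y hy]; have ny : y != 0 by apply: contraNneq nz => y0; rewrite -hy y0 mul0r.
  by rewrite -hy -expr2 -exprM mulnC -n_eq fermatF.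
move=> xh.
have [z pz] := primF F.
have [i hi] := prim_rootP pz (fermatF nz).
move: xh; rewrite hi -exprM => /eqP; rewrite -(expr0 z) (eq_prim_root_expr pz).
rewrite mod0n => /eqP hm.
have : (n %| i * h)%N by rewrite /dvdn hm.
rewrite n_eq mulnC dvdn_pmul2r ?h_gt0 // => /dvdnP [j hj].
by exists (z ^+ j); rewrite -exprD hj addnn -muln2.
Qed.
End Euler2.
Lemma exists_sqE (p r : nat) : prime p -> (r < p)%N ->
  [exists y : 'I_p, ((y * y) %% p)%N == r] <->
  (exists y : 'F_p, y * y = r%:R).
Proof.
move=> pp rp; split.
  move/existsP.
  move=> [y /eqP hy]; exists (val y)%:R.
  by rewrite -natrM -Fp_nat_mod // hy.
move=> [y hy]; apply/existsP.
have yp : (val y < p)%N by have := ltn_ord y; rewrite [X in (_ < X)%N -> _]Fp_cast.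
exists (Ordinal yp) => /=; apply/eqP.
have e1 : nat_of_ord (r%:R : 'F_p) = r by rewrite val_Fp_nat // modn_small.
have e2 : nat_of_ord (((val y) * (val y))%:R : 'F_p) = ((val y * val y) %% p)%N
  by rewrite val_Fp_nat.
rewrite natrM natr_Zp hy e1 in e2.
by rewrite -e2.
Qed.

Definition lF (p : nat) (x : 'F_p) : int :=
  if x == 0 then 0 else if x ^+ p./2 == 1 then 1 else -1.

Section FpFacts.
Variable p : nat.
Hypothesis pp : prime p.
Hypothesis op : odd p.

Lemma oddFp : odd #|'F_p|.
Proof. by rewrite card_Fp. Qed.

Lemma half_pred : (#|'F_p|.-1)./2 = p./2.
Proof.
rewrite card_Fp //; rewrite -{1}(odd_double_half p) op /=.
by rewrite doubleK.
Qed.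

Lemma Fp_m1_neq1 : (-1 : 'F_p) != 1.
Proof.
apply/eqP => h; have : ((2%N)%:R : 'F_p) = 0 by rewrite mulrS mulr1n -{1}h addNr.
move/eqP; rewrite -(Fp_nat_mod pp) -[0]/(0%:R) -(Fp_nat_mod pp) /=.
rewrite -(inj_eq (@ord_inj _)) /= !val_Fp_nat // !modn_mod.
have p2 : (2 < p)%N by have := prime_gt1 pp; move: op; case: p => [|[|[|]]].
by rewrite modn_small.
Qed.

Lemma r_lt (m : int) : (`|(m %% p)%Z|%N < p)%N.
Proof.
have p0 : (0 < p)%N by exact: prime_gt0.
have ge0 : 0 <= (m %% p)%Z by apply: modz_ge0; lia.
have := ltz_pmod m (_ : 0 < p%:Z); rewrite ltz_nat => /(_ p0).
by rewrite -{1}[(m %% p)%Z]gez0_abs // ltz_nat.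
Qed.

Lemma intr_Fp (m : int) : (m%:~R : 'F_p) = (`|(m %% p)%Z|%N)%:R.
Proof.
have p0 : (0 < p)%N by exact: prime_gt0.
rewrite {1}(divz_eq m p) rmorphD rmorphM /= (_ : (p%:Z)%:~R = (p%:R : 'F_p)) //.
rewrite pchar_Fp_0 // mulr0 add0r.
have ge0 : 0 <= (m %% p)%Z by apply: modz_ge0; lia.
by rewrite -[(m %% p)%Z]gez0_abs // -pmulrn.
Qed.

Lemma intr_Fp_eq0 (m : int) : ((m%:~R : 'F_p) == 0) = (p %| `|m|)%N.
Proof.
rewrite intr_Fp -(Fp_nat_mod pp).
rewrite -[X in _ == X]/(0%:R) -(Fp_nat_mod pp) -(inj_eq (@ord_inj _)) /=.
rewrite !val_Fp_nat // !modn_mod.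
rewrite modn_small ?r_lt // absz_eq0.
rewrite -[(p %| _)%N]/((p%:Z) %| m)%Z.
by apply/idP/idP => [/eqP/dvdz_mod0P //|/dvdz_mod0P ->].
Qed.

Lemma legendre_F (m : int) : legendre m p = lF (m%:~R : 'F_p).
Proof.
rewrite /legendre /lF intr_Fp_eq0; case: ifP => // nd.
have e := exists_sqE pp (r_lt m).
have nz : (m%:~R : 'F_p) != 0 by rewrite intr_Fp_eq0 nd.
have e2 := euler_sq oddFp nz; rewrite half_pred in e2.
rewrite -intr_Fp in e.
case: ifP => [/e /e2 -> //| ne].
case: eqP => // /e2 /e; by rewrite ne.
Qed.
Lemma half_gt0 : (0 < p./2)%N.
Proof. have := prime_gt1 pp; move: op; case: p => [|[|[|k]]] //. Qed.

Lemma signF_odd (k : nat) : ((-1) ^+ k : 'F_p) = if odd k then -1 else 1.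
Proof. by rewrite -signr_odd; case: (odd k); rewrite ?expr1 ?expr0. Qed.

Lemma signZ_odd (k : nat) : ((-1) ^+ k : int) = if odd k then -1 else 1.
Proof. by rewrite -signr_odd; case: (odd k); rewrite ?expr1 ?expr0. Qed.

Lemma lF_sign (x : 'F_p) k : x ^+ p./2 = (-1) ^+ k -> lF x = (-1) ^+ k.
Proof.
move=> hx; rewrite /lF.
have nz : x != 0.
  apply/eqP => x0; move: hx; rewrite x0 expr0n gtn_eqF ?half_gt0 //.
  rewrite signF_odd; case: (odd k) => /eqP; rewrite eq_sym ?oppr_eq0 oner_eq0 //.
rewrite (negbTE nz) hx !signF_odd signZ_odd.
by case: (odd k); rewrite ?eqxx // (negbTE Fp_m1_neq1).
Qed.

Lemma lF_m1 : lF (-1 : 'F_p) = (-1) ^+ p./2.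
Proof. exact: lF_sign. Qed.

Lemma lF_mul (x y : 'F_p) : lF (x * y) = lF x * lF y.
Proof.
have [->|nx] := eqVneq x 0; first by rewrite mul0r /lF eqxx mul0r.
have [->|ny] := eqVneq y 0; first by rewrite mulr0 /lF eqxx mulr0.
have ex : exists a : bool, x ^+ p./2 = (-1) ^+ a.
  have := euler_pm oddFp nx; rewrite half_pred => -[] ->; by [exists false|exists true].
have ey : exists a : bool, y ^+ p./2 = (-1) ^+ a.
  have := euler_pm oddFp ny; rewrite half_pred => -[] ->; by [exists false|exists true].
case: ex => a ha; case: ey => b hb.
rewrite (lF_sign ha) (lF_sign hb) -exprD; apply: lF_sign.
by rewrite exprMn ha hb exprD.
Qed.

Lemma legendre_mul (m n : int) : legendre (m * n) p = legendre m p * legendre n p.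
Proof. by rewrite !legendre_F // rmorphM lF_mul. Qed.

Lemma legendre_m1 : legendre (-1) p = (-1) ^+ p./2.
Proof. by rewrite legendre_F // rmorphN rmorph1 lF_m1. Qed.

Lemma legendre_mod (m n : int) : (p %| m - n)%Z -> legendre m p = legendre n p.
Proof.
move=> d; rewrite !legendre_F //; congr lF; apply/eqP; rewrite -subr_eq0 -rmorphB.
by rewrite intr_Fp_eq0.
Qed.


Definition mu (a : nat) : nat := \sum_(j < p./2) (p./2 < (a * j.+1) %% p)%N.

Section Gauss.
Variable a : nat.
Hypothesis na : ~~ (p %| a)%N.
Let h := p./2.
Let r (j : 'I_h) := ((a * j.+1) %% p)%N.
Let f (j : 'I_h) := if (h < r j)%N then (p - r j)%N else r j.

Lemma p_eq : p = (h.*2).+1.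
Proof. by rewrite -{1}(odd_double_half p) op. Qed.

Lemma r_pos j : (0 < r j)%N.
Proof.
rewrite lt0n /r; apply/negP => /eqP/eqP; rewrite -/(dvdn p _) Euclid_dvdM //.
rewrite (negbTE na) /= => /dvdn_leq => /(_ isT).
have := ltn_ord j; rewrite /h; have := p_eq; lia.
Qed.

Lemma rr_lt j : (r j < p)%N.
Proof. by rewrite ltn_mod prime_gt0. Qed.

Lemma f_pos j : (0 < f j)%N.
Proof. rewrite /f; have := r_pos j; have := rr_lt j; case: ifP => _; lia. Qed.

Lemma f_lt j : ((f j).-1 < h)%N.
Proof. rewrite /f; have := r_pos j; have := rr_lt j; have := p_eq; case: ifP; lia. Qed.

Lemma r_inj (j k : 'I_h) : r j = r k -> nat_of_ord j = nat_of_ord k.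
Proof.
have pe := p_eq.
wlog le : j k / (k <= j)%N.
  move=> W ejk; case: (leqP k j) => le; first exact: W.
  by symmetry; apply: W => //; exact: ltnW.
have jl := ltn_ord j; have kl := ltn_ord k.
move=> /eqP; rewrite /r eqn_mod_dvd; last by rewrite leq_mul2l ltnS le orbT.
rewrite -mulnBr Euclid_dvdM // (negbTE na) /= => hd.
case: (posnP (j.+1 - k.+1)) => [z|pos]; first lia.
have := dvdn_leq pos hd; lia.
Qed.

Definition g (j : 'I_h) : 'I_h := Ordinal (f_lt j).

Lemma g_inj : injective g.
Proof.
move=> j k /(congr1 val) /= e.
have ef : f j = f k by have := f_pos j; have := f_pos k; lia.
have jl := ltn_ord j; have kl := ltn_ord k; have pe := p_eq.
apply: val_inj => /=.
have pg0 : (0 < p)%N by rewrite prime_gt0.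
move: ef; rewrite /f.
have key1 : r j = r k -> nat_of_ord j = nat_of_ord k by apply: r_inj.
have key2 : (r j + r k)%N = p -> False.
  move=> sp; have : (p %| a * (j.+1 + k.+1))%N.
    by rewrite mulnDr /dvdn -modnDm -/(r j) -/(r k) sp modnn.
  rewrite Euclid_dvdM // (negbTE na) /= => hd; have := dvdn_leq (_ : 0 < j.+1 + k.+1)%N hd; lia.
have rjl := rr_lt j; have rkl := rr_lt k.
case: ifP; case: ifP => h1 h2 e2.
- apply: key1; lia.
- exfalso; apply: key2; lia.
- exfalso; apply: key2; lia.
- exact: key1.
Qed.

Lemma Fp_nat_eq (m n : nat) : (m %% p = n %% p)%N -> (m%:R : 'F_p) = n%:R.
Proof. by move=> e; rewrite -(Fp_nat_mod pp) e (Fp_nat_mod pp). Qed.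

Lemma term_eq (j : 'I_h) :
  ((a * j.+1)%:R : 'F_p) = (-1) ^+ (h < r j)%N * ((g j).+1)%:R.
Proof.
rewrite /= prednK ?f_pos // /f.
have e : ((a * j.+1)%:R : 'F_p) = (r j)%:R by rewrite /r (Fp_nat_mod pp).
rewrite e; case: ifP => _; last by rewrite expr0 mul1r.
by rewrite expr1 natrB ?(ltnW (rr_lt j)) // pchar_Fp_0 // sub0r mulN1r opprK.
Qed.

Lemma gauss_lemma : (a%:R : 'F_p) ^+ p./2 = (-1) ^+ (mu a).
Proof.
have P0 : \prod_(j < h) ((j.+1)%:R : 'F_p) != 0.
  rewrite prodf_seq_neq0; apply/allP => j _ /=.
  rewrite -(Fp_nat_mod pp) -[X in _ != X]/(0%:R) -(Fp_nat_mod pp) -(inj_eq (@ord_inj _)) /=.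
  rewrite !val_Fp_nat // !modn_mod modn_small //; have := ltn_ord j; have := p_eq; lia.
have E1 : \prod_(j < h) ((a * j.+1)%:R : 'F_p) = (a%:R) ^+ h * \prod_(j < h) ((j.+1)%:R : 'F_p).
  rewrite (eq_bigr (fun j : 'I_h => (a%:R : 'F_p) * (j.+1)%:R)) => [|j _]; last by rewrite natrM.
  by rewrite big_split /= prodr_const card_ord.
have E2 : \prod_(j < h) ((a * j.+1)%:R : 'F_p) = (-1) ^+ (mu a) * \prod_(j < h) ((j.+1)%:R : 'F_p).
  rewrite (eq_bigr _ (fun j _ => term_eq j)) big_split /= prodrXr.
  rewrite (@reindex_inj _ _ _ _ g _ (fun j : 'I_h => ((j.+1)%:R : 'F_p)) g_inj) /=. by [].
by move: E1; rewrite E2 => /mulIf => /(_ P0) ->.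
Qed.

Lemma mu_parity : odd a -> odd (mu a) = odd (\sum_(j < p./2) (a * j.+1) %/ p)%N.
Proof.
move=> oa.
set S := (\sum_(j < h) j.+1)%N.
set Fl := (\sum_(j < p./2) (a * j.+1) %/ p)%N.
set R := (\sum_(j < h) r j)%N.
set X := (\sum_(j < h) (if (h < r j)%N then 0 else r j))%N.
have e1 : (a * S = Fl * p + R)%N.
  rewrite /S /Fl /R big_distrr big_distrl -big_split /=; apply: eq_bigr => j _.
  exact: divn_eq.
have e3 : (\sum_(j < h) f j = S)%N.
  rewrite /S (@reindex_inj _ _ _ _ g _ (fun j : 'I_h => j.+1) g_inj) /=.
  by apply: eq_bigr => j _; rewrite prednK ?f_pos.
have e2 : (R + S = mu a * p + X.*2)%N.
  rewrite -e3 /R /mu /X -big_split /= big_distrl -muln2 big_distrl -big_split /=.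
  apply: eq_bigr => j _; rewrite /f; have := rr_lt j; case: ifP => /= _; lia.
have op' : odd p := op.
move: (congr1 odd e1) (congr1 odd e2).
rewrite !oddD !oddM oa op' odd_double /= andbT addbF.
by case: (odd S); case: (odd R); case: (odd Fl); case: (odd (mu a)).
Qed.
End Gauss.
End FpFacts.

Lemma qr_prime (p q : nat) : prime p -> prime q -> odd p -> odd q -> p != q ->
  legendre (q%:Z) p * legendre (p%:Z) q = (-1) ^+ (p./2 * q./2).
Proof.
move=> pp pq op oq npq.
have cpq : coprime p q by rewrite prime_coprime // dvdn_prime2 //.
have nqp : ~~ (p %| q)%N by rewrite dvdn_prime2 //.
have npq' : ~~ (q %| p)%N by rewrite dvdn_prime2 // eq_sym.
have L1 : legendre (q%:Z) p = (-1) ^+ (\sum_(j < p./2) (q * j.+1) %/ p)%N.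
  rewrite legendre_F // -signr_odd -mu_parity //; apply: lF_sign => //; rewrite signr_odd.
  exact: gauss_lemma.
have L2 : legendre (p%:Z) q = (-1) ^+ (\sum_(j < q./2) (p * j.+1) %/ q)%N.
  rewrite legendre_F // -signr_odd -mu_parity // signr_odd; apply: lF_sign => //.
  exact: gauss_lemma.
by rewrite L1 L2 -exprD lattice.
Qed.

Definition chi (n : nat) : int := (-1) ^+ n./2.

Lemma chi_mul (a b : nat) : odd a -> odd b -> chi (a * b) = chi a * chi b.
Proof.
move=> oa ob; rewrite /chi -exprD -signr_odd -[in RHS]signr_odd; congr (_ ^+ _).
have ha := odd_double_half a; have hb := odd_double_half b.
rewrite oa in ha; rewrite ob in hb.
set x := a./2 in ha *; set y := b./2 in hb *.
have -> : (a * b = true + (x * y * 2 + x + y).*2)%N by rewrite -ha -hb; lia.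
by rewrite half_bit_double oddD !oddD oddM andbF.
Qed.

Lemma chi1 : chi 1 = 1. Proof. by []. Qed.

Lemma chi_exp (a e : nat) : odd a -> chi (a ^ e) = chi a ^+ e.
Proof.
move=> oa; elim: e => [|e IH]; first by rewrite expn0 expr0.
by rewrite expnS chi_mul ?IH ?exprS // oddX oa orbT.
Qed.

Lemma chi_prod (s : seq nat) (e : nat -> nat) : all odd s ->
  chi (\prod_(x <- s) x ^ e x) = \prod_(x <- s) chi x ^+ e x.
Proof.
elim: s => [|x s IH]; first by rewrite !big_nil.
rewrite /= => /andP [ox os]; rewrite !big_cons chi_mul ?chi_exp ?IH //.
  by rewrite oddX ox orbT.
rewrite (big_morph odd (id1 := true) (op1 := andb)) ?big_all //.
  apply/allP => y ys; rewrite oddX (allP os y ys) orbT //.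
by move=> u v; rewrite oddM.
Qed.

Lemma prime_odd_of (p n : nat) : odd n -> p \in primes n -> odd p.
Proof.
move=> on; rewrite mem_primes => /and3P [pp n0 dv].
case: (even_prime pp) => // p2; move: dv; rewrite p2 dvdn2 on //.
Qed.

Lemma n_decomp (n : nat) : (0 < n)%N ->
  n = (\prod_(p <- primes n) p ^ logn p n)%N.
Proof. by move=> n0; rewrite {1}(prod_prime_decomp n0) prime_decompE big_map. Qed.

Lemma jacobi1 (m : int) : jacobi m 1 = 1.
Proof. by rewrite /jacobi big_nil. Qed.

Lemma jacobi_mul (m m' : int) (n : nat) : odd n ->
  jacobi (m * m') n = jacobi m n * jacobi m' n.
Proof.
move=> on; rewrite /jacobi -big_split /=; apply: eq_big_seq => p pin.
have pp : prime p by move: pin; rewrite mem_primes => /and3P [].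
by rewrite legendre_mul ?exprMn // (prime_odd_of on pin).
Qed.

Lemma jacobi_mod (m m' : int) (n : nat) : odd n -> (n%:Z %| m - m')%Z ->
  jacobi m n = jacobi m' n.
Proof.
move=> on d; rewrite /jacobi; apply: eq_big_seq => p pin.
have := pin; rewrite mem_primes => /and3P [pp n0 dv].
rewrite (@legendre_mod p pp (prime_odd_of on pin) m m') //.
by apply: dvdz_trans d; rewrite dvdzE.
Qed.

Lemma jacobi_m1 (n : nat) : odd n -> jacobi (-1) n = chi n.
Proof.
move=> on; have n0 : (0 < n)%N by case: (n) on.
rewrite {2}(n_decomp n0) chi_prod; last first.
  by apply/allP => p; apply: prime_odd_of.
rewrite /jacobi; apply: eq_big_seq => p pin.
have pp : prime p by move: pin; rewrite mem_primes => /and3P [].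
by rewrite legendre_m1 // (prime_odd_of on pin).
Qed.

Lemma legendre1 (p : nat) : prime p -> odd p -> legendre 1 p = 1.
Proof.
move=> pp op; rewrite legendre_F // rmorph1 /lF oner_eq0 expr1n eqxx //.
Qed.

Lemma legendre_exp (p : nat) (m : int) (k : nat) : prime p -> odd p ->
  legendre (m ^+ k) p = legendre m p ^+ k.
Proof.
move=> pp op; elim: k => [|k IH]; first by rewrite !expr0 legendre1.
by rewrite !exprS legendre_mul // IH.
Qed.

Lemma legendre_prod (p : nat) (s : seq nat) (f : nat -> nat) : prime p -> odd p ->
  legendre (\prod_(q <- s) (q%:Z) ^+ f q) p = \prod_(q <- s) legendre q p ^+ f q.
Proof.
move=> pp op; elim: s => [|x s IH]; first by rewrite !big_nil legendre1.
by rewrite !big_cons legendre_mul // legendre_exp // IH.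
Qed.

Lemma natz_decomp (n : nat) : (0 < n)%N ->
  n%:Z = \prod_(q <- primes n) (q%:Z) ^+ logn q n.
Proof.
move=> n0; rewrite {1}(n_decomp n0) -natz natr_prod.
by apply: eq_bigr => q _; rewrite natrX natz.
Qed.

Lemma jacobi_expand (n' n : nat) : odd n -> (0 < n')%N ->
  jacobi n' n = \prod_(p <- primes n) \prod_(q <- primes n')
                  legendre q p ^+ (logn q n' * logn p n).
Proof.
move=> on n0; rewrite /jacobi; apply: eq_big_seq => p pin.
have pp : prime p by move: pin; rewrite mem_primes => /and3P [].
have op := prime_odd_of on pin.
rewrite natz_decomp // legendre_prod // -prodrXl.
by apply: eq_bigr => q _; rewrite exprM.
Qed.

Lemma jacobi_recip (n n' : nat) : odd n -> odd n' -> coprime n n' ->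
  jacobi n' n * jacobi n n' = (-1) ^+ (n./2 * n'./2).
Proof.
move=> on on' cop.
have n0 : (0 < n)%N by case: (n) on.
have n0' : (0 < n')%N by case: (n') on'.
rewrite jacobi_expand // jacobi_expand // [X in _ * X]exchange_big /= -big_split /=.
set N := (\sum_(q <- primes n') q./2 * logn q n')%N.
transitivity (\prod_(p <- primes n) ((-1 : int) ^+ (p./2 * logn p n)) ^+ N).
  apply: eq_big_seq => p pin; rewrite -big_split /= /N -prodrXr.
  apply: eq_big_seq => q qin.
  have pp : prime p by move: pin; rewrite mem_primes => /and3P [].
  have qp : prime q by move: qin; rewrite mem_primes => /and3P [].
  have op := prime_odd_of on pin; have oq := prime_odd_of on' qin.
  have npq : p != q.
    apply/eqP => epq; move: cop; rewrite /coprime => /eqP g1.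
    have : (p %| gcdn n n')%N.
      rewrite dvdn_gcd; move: pin qin; rewrite !mem_primes -epq.
      by move=> /and3P [_ _ ->] /and3P [_ _ ->].
    by rewrite g1 dvdn1 => /eqP p1; move: pp; rewrite p1.
  rewrite (mulnC (logn p n)) -exprMn qr_prime // -!exprM; congr (_ ^+ _); lia.
rewrite prodrXl.
have -> : \prod_(p <- primes n) (-1) ^+ (p./2 * logn p n) = chi n.
  rewrite [in RHS](n_decomp n0) chi_prod; last by apply/allP => p; apply: prime_odd_of.
  by apply: eq_bigr => p _; rewrite exprM.
have eN : (-1) ^+ N = chi n' :> int.
  rewrite /N -prodrXr [in RHS](n_decomp n0') chi_prod; last by apply/allP => p; apply: prime_odd_of.
  by apply: eq_bigr => p _; rewrite exprM.
by rewrite /chi -exprM mulnC exprM eN /chi -exprM mulnC.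
Qed.

Section CF.
Variable a : nat -> int.
Definition Sm k := (conv a k).1.1.1.
Definition Tm k := (conv a k).1.2.
Local Notation S := (conv_s a).
Local Notation T := (conv_t a).

Lemma conv_eq k : conv a k = (Sm k, S k, Tm k, T k).
Proof. by rewrite /Sm /Tm /conv_s /conv_t; case: (conv a k) => [[[x y] z] w]. Qed.

Lemma S_succ k : S k.+1 = a k.+1 * S k + Sm k.
Proof. by rewrite {1}/conv_s /= conv_eq. Qed.
Lemma T_succ k : T k.+1 = a k.+1 * T k + Tm k.
Proof. by rewrite {1}/conv_t /= conv_eq. Qed.
Lemma Sm_succ k : Sm k.+1 = S k.
Proof. by rewrite {1}/Sm /= conv_eq. Qed.
Lemma Tm_succ k : Tm k.+1 = T k.
Proof. by rewrite {1}/Tm /= conv_eq. Qed.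

Lemma S_rec k : S k.+2 = a k.+2 * S k.+1 + S k.
Proof. by rewrite S_succ Sm_succ. Qed.
Lemma T_rec k : T k.+2 = a k.+2 * T k.+1 + T k.
Proof. by rewrite T_succ Tm_succ. Qed.

Lemma det k : S k.+1 * T k - S k * T k.+1 = (-1) ^+ k.
Proof.
elim: k => [|k IH].
  by rewrite S_succ T_succ /Sm /Tm /conv_s /conv_t /=; ring.
rewrite S_rec T_rec exprS -IH; ring.
Qed.

Lemma T_pos : (forall i, (0 < i)%N -> 0 < a i) -> forall k, 0 < T k /\ 0 < T k.+1.
Proof.
move=> ha; elim => [|k [h1 h2]].
  split; first by [].
  rewrite T_succ /Tm /conv_t /= mulr1 addr0; exact: ha.
split => //; rewrite T_rec.
have := ha k.+2 isT; nra.
Qed.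
End CF.

Lemma jacobi_one (n : nat) : odd n -> jacobi 1 n = 1.
Proof.
move=> on; rewrite /jacobi big1_seq // => p /andP [_ pin].
have pp : prime p by move: pin; rewrite mem_primes => /and3P [].
by rewrite legendre1 ?expr1n // (prime_odd_of on pin).
Qed.

Lemma jacobi_sign (n m : nat) : odd n ->
  jacobi ((-1) ^+ m) n = (-1) ^+ (odd n./2 && odd m).
Proof.
move=> on; elim: m => [|m IH]; first by rewrite expr0 jacobi_one // andbF.
rewrite exprS jacobi_mul // IH jacobi_m1 // /chi -signr_odd -signr_addb /=.
by case: (odd n./2); case: (odd m).
Qed.

Lemma ext_some (m n : int) v : jacobi_ext m n = Some v -> odd `|n|%N /\ jacobi m `|n|%N = v.
Proof. by rewrite /jacobi_ext; case: ifP => // o [<-]. Qed.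

Lemma sgn_inj (x y : bool) : ((-1) ^+ x = (-1) ^+ y :> int) -> x = y.
Proof. by case: x; case: y. Qed.

Section Main.
Variable a : nat -> int.
Hypothesis ha : forall i, (0 < i)%N -> 0 < a i.
Local Notation S := (conv_s a).
Local Notation T := (conv_t a).
Let t i := `|T i|%N.

Lemma Tt i : T i = (t i)%:Z.
Proof. rewrite /t gez0_abs //; case: (T_pos ha i) => h _; exact: ltW. Qed.

Lemma R1 i : odd (t i) ->
  jacobi (-1) (t i) * jacobi (S i) (t i) * jacobi (t i.+1) (t i) = jacobi ((-1) ^+ i) (t i).
Proof.
move=> o; rewrite -!jacobi_mul //; apply: jacobi_mod => //.
have -> : -1 * S i * (t i.+1)%:Z - (-1) ^+ i = (- S i.+1) * (t i)%:Z.
  by rewrite -!Tt -(det a i); ring.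
exact: dvdz_mull (dvdzz _).
Qed.

Lemma R2 i : odd (t i.+1) ->
  jacobi (S i.+1) (t i.+1) * jacobi (t i) (t i.+1) = jacobi ((-1) ^+ i) (t i.+1).
Proof.
move=> o; rewrite -!jacobi_mul //; apply: jacobi_mod => //.
have -> : S i.+1 * (t i)%:Z - (-1) ^+ i = S i * (t i.+1)%:Z.
  by rewrite -!Tt -(det a i); ring.
exact: dvdz_mull (dvdzz _).
Qed.

Lemma R3 i : odd (t i.+1) -> jacobi (t i.+2) (t i.+1) = jacobi (t i) (t i.+1).
Proof.
move=> o; apply: jacobi_mod => //.
have -> : (t i.+2)%:Z - (t i)%:Z = a i.+2 * (t i.+1)%:Z by rewrite -!Tt T_rec; ring.
exact: dvdz_mull (dvdzz _).
Qed.

Lemma cop i : coprime (t i) (t i.+1).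
Proof.
rewrite /coprime; set g := gcdn _ _.
have d1 : (g%:Z %| T i)%Z by rewrite Tt dvdzE /= dvdn_gcdl.
have d2 : (g%:Z %| T i.+1)%Z by rewrite Tt dvdzE /= dvdn_gcdr.
have : (g%:Z %| (-1) ^+ i)%Z by rewrite -(det a i) rpredB // dvdz_mull.
by rewrite dvdzE abszX /= exp1n dvdn1.
Qed.

Lemma solve3 (x y z : bool) (A : int) :
  (-1) ^+ x * (-1) ^+ y * A = (-1) ^+ z -> A = (-1) ^+ (x (+) y (+) z).
Proof. by case: x; case: y; case: z; rewrite /= ?expr0 ?expr1 => h; lia. Qed.

Lemma solve2 (y z : bool) (A : int) :
  (-1) ^+ y * A = (-1) ^+ z -> A = (-1) ^+ (y (+) z).
Proof. by case: y; case: z; rewrite /= ?expr0 ?expr1 => h; lia. Qed.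

Lemma chi_sign (n : nat) : jacobi (-1) n = (-1) ^+ (odd n./2) \/ ~~ odd n.
Proof. by case on: (odd n); [left; rewrite jacobi_m1 // /chi signr_odd | right]. Qed.

Lemma recip_sign i : odd (t i) -> odd (t i.+1) ->
  jacobi (t i.+1) (t i) * jacobi (t i) (t i.+1) = (-1) ^+ (odd (t i)./2 && odd (t i.+1)./2).
Proof. by move=> o1 o2; rewrite jacobi_recip // ?cop // -signr_odd oddM. Qed.

Lemma no_pattern k :
  ~ [/\ jacobi_ext (S k) (T k) = Some (-1), jacobi_ext (S k.+1) (T k.+1) = Some 1,
        jacobi_ext (S k.+2) (T k.+2) = Some 1 & jacobi_ext (S k.+3) (T k.+3) = Some (-1)].
Proof.
move=> [/ext_some [o0 j0] /ext_some [o1 j1] /ext_some [o2 j2] /ext_some [o3 j3]].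
rewrite -/(t _) in o0 j0 o1 j1 o2 j2 o3 j3.
have m1 : forall n, odd n -> jacobi (-1) n = (-1) ^+ (odd n./2).
  by move=> n on; rewrite jacobi_m1 // /chi signr_odd.
have E0 := R1 o0; rewrite m1 // j0 jacobi_sign // in E0.
move: E0; rewrite -[X in _ * X * _ = _](expr1 (-1 : int)) => /(@solve3 _ true) A0.
have E1 := R1 o1; rewrite m1 // j1 jacobi_sign // in E1.
move: E1; rewrite -[X in _ * X * _ = _](expr0 (-1 : int)) => /(@solve3 _ false) A1.
have E2 := R1 o2; rewrite m1 // j2 jacobi_sign // in E2.
move: E2; rewrite -[X in _ * X * _ = _](expr0 (-1 : int)) => /(@solve3 _ false) A2.
have B2 := R2 o3; rewrite j3 jacobi_sign // in B2.
move: B2; rewrite -[X in X * _ = _](expr1 (-1 : int)) => /(@solve2 true) B2.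
have P0 := recip_sign o0 o1; rewrite -(R3 o1) A0 A1 -signr_addb in P0.
have P1 := recip_sign o1 o2; rewrite -(R3 o2) A1 A2 -signr_addb in P1.
have P2 := recip_sign o2 o3; rewrite A2 B2 -signr_addb in P2.
move/sgn_inj: P0; move/sgn_inj: P1; move/sgn_inj: P2.
rewrite /= ?oddS.
by case: (odd k); case: (odd (t k)./2); case: (odd (t k.+1)./2); case: (odd (t k.+2)./2);
  case: (odd (t k.+3)./2).
Qed.
End Main.

Lemma irr_step (R : realType) (y : R) (n : int) :
  irrational y -> irrational ((y - n%:~R)^-1).
Proof.
move=> hy [q _ hq]; apply: hy.
exists (q^-1 + n%:~R) => //.
by rewrite rmorphD fmorphV /= hq invrK ratr_int subrK.
Qed.

Lemma irr_rem (R : realType) (x : R) k : irrational x -> irrational (cf_rem x k).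
Proof. by move=> hx; elim: k => [|k IH] //=; apply: irr_step. Qed.

Lemma digit_pos (R : realType) (x : R) : irrational x ->
  forall i, (0 < i)%N -> 0 < cf_digit x i.
Proof.
move=> hx [|j] // _; rewrite /cf_digit /=.
set y := cf_rem x j.
have iy : irrational y by exact: irr_rem.
have h1 := floor_le y; have h2 := floorD1_gt y.
have ne : y != (Num.floor y)%:~R.
  apply/eqP => e; apply: iy; exists (Num.floor y)%:~R => //; by rewrite ratr_int.
have f0 : 0 < y - (Num.floor y)%:~R by rewrite subr_gt0 lt_neqAle eq_sym ne h1.
have f1 : y - (Num.floor y)%:~R < 1.
  move: h2; rewrite rmorphD /=; lra.
rewrite floor_gt0; move: f0 f1; set z := y - _ => f0 f1.
by rewrite -[X in X <= _]invr1 lef_pV2 ?posrE ?ltr01 // ltW.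
Qed.


Theorem theorem9 :
  (forall (R : realType) (x : R), @irrational R x ->
     ~ exists k : nat,
         [/\ jacobi_seq x k = Some (-1), jacobi_seq x k.+1 = Some 1,
             jacobi_seq x k.+2 = Some 1 & jacobi_seq x k.+3 = Some (-1)])
  /\
  (forall (R : realType) (x : R), @irrational R x ->
     ~ exists N : nat, forall j : nat,
         [/\ jacobi_seq x (N + 3 * j)%N = Some 1,
             jacobi_seq x (N + 3 * j).+1 = Some 1 &
             jacobi_seq x (N + 3 * j).+2 = Some (-1)]).
Proof.
split.
  move=> R x hx [k H]; exact: (no_pattern (digit_pos hx) H).
move=> R x hx [N H].
apply: (@no_pattern _ (digit_pos hx) N.+2).
have [_ _ h2] := H 0%N; have [h3 h4 h5] := H 1%N.
have e0 : (N + 3 * 0 = N)%N by lia.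
have e1 : (N + 3 * 1 = N.+3)%N by lia.
rewrite e0 in h2; rewrite e1 in h3 h4 h5.
by split.
Qed.
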